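(* Let $n\ge1$, $d=2^n$, and let $|\psi\rangle$ be an $n$-qubit pure state. Then $|St(|\psi\rangle)|\le d^2/\mathrm{card}(|\psi\rangle)$; equivalently $M_0(|\psi\rangle)\le \nu(|\psi\rangle)$. Consequently $M_\alpha(|\psi\rangle)\le\nu(|\psi\rangle)$ for every $\alpha\ge0$.
   Context: Logarithms are base 2. $\mathcal{P}_n$ is the set of $4^n$ $n$-qubit Pauli strings $\sigma_1\otimes\cdots\otimes\sigma_n$, $\sigma_i\in\{I,X,Y,Z\}$ (no phases). $\Xi_P(|\psi\rangle)=d^{-1}\langle\psi|P|\psi\rangle^2$. The stabilizer $\alpha$-Rényi entropy is $M_\alpha(|\psi\rangle)=\frac{1}{1-\alpha}\log\sum_{P\in\mathcal{P}_n}\Xi_P^\alpha-\log d$ for $\alpha\ne1$ (for $\alpha=0$ summing only over $P$ with $\Xi_P\neq0$), and $M_1=-\sum_P\Xi_P\log\Xi_P-\log d$. $\mathrm{card}(|\psi\rangle)=|\{P\in\mathcal{P}_n:\langle\psi|P|\psi\rangle\ne0\}|$, so $M_0(|\psi\rangle)=\log(\mathrm{card}(|\psi\rangle)/d)$. $St(|\psi\rangle)=\{P\in\mathcal{P}_n: P|\psi\rangle=\pm|\psi\rangle\}$, and the stabilizer nullity is $\nu(|\psi\rangle)=n-\log|St(|\psi\rangle)|$. *)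

(* Defs.v *)
From HB Require Import structures.
From mathcomp Require Import all_boot all_order all_algebra.
From mathcomp Require Import reals exp.
From mathcomp Require Import complex.
Set Implicit Arguments. Unset Strict Implicit. Unset Printing Implicit Defensive.
Import Order.TTheory GRing.Theory Num.Theory.
Local Open Scope ring_scope.

Section Pauli.
Variable R : realType.
Local Notation C := R[i].

Definition log2 (x : R) : R := ln x / ln 2.

(* single-qubit Pauli matrices: index 0 = I, 1 = X, 2 = Y, 3 = Z;
   entries sigma a r c = (row r, column c) *)
Definition sigma (a : 'I_4) (r c : 'I_2) : C :=
  match nat_of_ord a, nat_of_ord r, nat_of_ord c with
  | 0, 0, 0 => 1 | 0, 1, 1 => 1
  | 1, 0, 1 => 1 | 1, 1, 0 => 1
  | 2, 0, 1 => - 'i%C | 2, 1, 0 => 'i%C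
  | 3, 0, 0 => 1 | 3, 1, 1 => -1
  | _, _, _ => 0
  end.

Definition qbit n (i : 'I_(2 ^ n)) (k : 'I_n) : 'I_2 := inord (odd (i %/ 2 ^ k)).

(* n-qubit Pauli strings (no phases), labelled by f : 'I_n -> {I,X,Y,Z};
   the matrix is the tensor product sigma_{f 0} (x) ... (x) sigma_{f (n-1)} *)
Definition pauli_string n := {ffun 'I_n -> 'I_4}.

Definition pauli_mx n (P : pauli_string n) : 'M[C]_(2 ^ n) :=
  \matrix_(i, j) \prod_(k < n) sigma (P k) (qbit i k) (qbit j k).

Definition is_pure_state n (psi : 'cV[C]_(2 ^ n)) : Prop :=
  \sum_(i < 2 ^ n) (psi i 0)^*%C * psi i 0 = 1.

Definition expval n (P : pauli_string n) (psi : 'cV[C]_(2 ^ n)) : C :=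
  \sum_(i < 2 ^ n) \sum_(j < 2 ^ n) (psi i 0)^*%C * pauli_mx P i j * psi j 0.

Definition dimR n : R := (2 ^ n)%:R.

(* Xi_P(psi) = d^-1 <psi|P|psi>^2  (the expectation value is real, so we
   take its real part) *)
Definition Xi n (P : pauli_string n) (psi : 'cV[C]_(2 ^ n)) : R :=
  (dimR n)^-1 * (complex.Re (expval P psi)) ^+ 2.

Definition St n (psi : 'cV[C]_(2 ^ n)) : {set pauli_string n} :=
  [set P | (pauli_mx P *m psi == psi) || (pauli_mx P *m psi == - psi)].

Definition pcard n (psi : 'cV[C]_(2 ^ n)) : nat :=
  #|[set P : pauli_string n | expval P psi != 0]|.

Definition nullity n (psi : 'cV[C]_(2 ^ n)) : R :=
  n%:R - log2 (#|St psi|)%:R.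

(* stabilizer alpha-Renyi entropy; for alpha <> 1 the sum runs over the P
   with Xi_P <> 0 (this is the stated convention for alpha = 0, and does
   not change the sum for alpha > 0 since 0 `^ alpha = 0); for alpha = 1
   the terms with Xi_P = 0 are 0 by the convention 0 log 0 = 0. *)
Definition Malpha n (alpha : R) (psi : 'cV[C]_(2 ^ n)) : R :=
  if alpha == 1 then
    - (\sum_(P : pauli_string n | Xi P psi != 0) Xi P psi * log2 (Xi P psi))
    - log2 (dimR n)
  else
    (1 - alpha)^-1 * log2 (\sum_(P : pauli_string n | Xi P psi != 0)
                              powR (Xi P psi) alpha)
    - log2 (dimR n).

End Pauli.

(* Main.v *)
Require Import Defs.
From HB Require Import structures.
From mathcomp Require Import all_boot all_order all_algebra.
From mathcomp Require Import reals exp.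
From mathcomp Require Import complex.
From mathcomp Require Import ring lra.
Import Order.TTheory GRing.Theory Num.Theory.
Local Open Scope ring_scope.
Set Implicit Arguments. Unset Strict Implicit. Unset Printing Implicit Defensive.

Definition xor4n (a b : nat) : nat :=
  match a, b with
  | 0, x => x | x, 0 => x
  | 1, 1 => 0 | 1, 2 => 3 | 1, 3 => 2
  | 2, 1 => 3 | 2, 2 => 0 | 2, 3 => 1
  | 3, 1 => 2 | 3, 2 => 1 | 3, 3 => 0
  | _, _ => 0 end.

Lemma xor4n_lt (a b : 'I_4) : (xor4n a b < 4)%N.
Proof. by case: a => [[|[|[|[|?]]]] Ha]; case: b => [[|[|[|[|?]]]] Hb]. Qed.

Definition xor4 (a b : 'I_4) : 'I_4 := Ordinal (xor4n_lt a b).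

Definition anti (a b : 'I_4) : bool :=
  [&& (nat_of_ord a != 0)%N, (nat_of_ord b != 0)%N & (nat_of_ord a != b)].

Ltac cas4 a := case: a => [[|[|[|[|?]]]] ?] //.
Ltac cas2 a := case: a => [[|[|?]] ?] //.
Section B.
Variable R : realType.
Local Notation C := R[i].

Definition ph (a b : 'I_4) : C :=
  match nat_of_ord a, nat_of_ord b with
  | 1, 2 => 'i%C | 2, 1 => - 'i%C
  | 2, 3 => 'i%C | 3, 2 => - 'i%C
  | 3, 1 => 'i%C | 1, 3 => - 'i%C
  | _, _ => 1 end.

Lemma iiC : 'i%C * 'i%C = -1 :> C.
Proof. by rewrite -expr2 sqr_i. Qed.


Lemma sigma_mul (a b : 'I_4) (r c : 'I_2) :
  \sum_(m < 2) sigma R a r m * sigma R b m c = ph a b * sigma R (xor4 a b) r c.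
Proof.
rewrite !big_ord_recl big_ord0 /=.
cas4 a; cas4 b; cas2 r; cas2 c; rewrite /sigma /ph /= ?mulr0 ?mul0r ?addr0 ?add0r ?mulr1 ?mul1r ?mulrN ?mulNr ?opprK ?iiC ?opprK ?mulr1 ?mul1r //.
Qed.

Lemma conj_i : ('i%C)^*%C = - 'i%C :> C.
Proof. by apply/eqP; rewrite eq_complex /= oppr0 !eqxx. Qed.

Lemma sigma_conj (a : 'I_4) (r c : 'I_2) : (sigma R a r c)^*%C = sigma R a c r.
Proof.
cas4 a; cas2 r; cas2 c; rewrite /sigma /= ?rmorphN ?conjc1 ?conjc0 ?conj_i ?opprK //.
all: apply/eqP; rewrite eq_complex /= ?oppr0 ?eqxx //.
Qed.

Lemma sigma0 (r c : 'I_2) : sigma R ord0 r c = (r == c)%:R.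
Proof. by cas2 r; cas2 c. Qed.

Lemma sigma_pars (r c r' c' : 'I_2) :
  \sum_(a < 4) sigma R a r c * sigma R a c' r' = 2%:R * ((r == r') && (c == c'))%:R.
Proof.
rewrite !big_ord_recl big_ord0 /=.
cas2 r; cas2 c; cas2 r'; cas2 c'; rewrite /sigma /= ?mulr0 ?mul0r ?addr0 ?add0r ?mulr1 ?mul1r ?mulrN ?mulNr ?opprK ?iiC ?opprK ?mulr1 ?mul1r ?addr0 ?add0r ?subrr //.
Qed.

Definition sgn (b : bool) : C := if b then -1 else 1.

Lemma ph_comm (a b : 'I_4) : ph a b = sgn (anti a b) * ph b a.
Proof. by cas4 a; cas4 b; rewrite /ph /sgn /= ?mul1r ?mulN1r ?opprK. Qed.

Lemma ph_sq (a b : 'I_4) : ph a b ^+ 2 = sgn (anti a b).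
Proof. by cas4 a; cas4 b; rewrite /ph /sgn /= ?expr1n ?sqrrN ?sqr_i. Qed.
End B.

Lemma xor4C (a b : 'I_4) : xor4 a b = xor4 b a.
Proof. by apply: val_inj; cas4 a; cas4 b. Qed.

Lemma xor4K (a b : 'I_4) : xor4 a (xor4 a b) = b.
Proof. by apply: val_inj; cas4 a; cas4 b. Qed.

Lemma xor4aa (a : 'I_4) : xor4 a a = ord0.
Proof. by apply: val_inj; cas4 a. Qed.

Lemma anti_xor (a a' q : 'I_4) : anti (xor4 a a') q = anti a q (+) anti a' q.
Proof. by cas4 a; cas4 a'; cas4 q. Qed.

Lemma antiC (a b : 'I_4) : anti a b = anti b a.
Proof. by cas4 a; cas4 b. Qed.


Section A.
Variable R : realType.
Local Notation C := R[i].

Lemma qbitE n (i : 'I_(2^n)) k : nat_of_ord (qbit i k) = odd (i %/ 2^k).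
Proof. by rewrite /qbit inordK // ltnS leq_b1. Qed.

Lemma bits_inj_nat n : forall i j, (i < 2^n)%N -> (j < 2^n)%N ->
  (forall k, (k < n)%N -> odd (i %/ 2^k) = odd (j %/ 2^k)) -> i = j.
Proof.
elim: n => [|n IH] i j.
  by rewrite expn0 !ltnS !leqn0 => /eqP-> /eqP->.
move=> Hi Hj H.
have H0 := H 0 isT; rewrite !expn0 !divn1 in H0.
have E : i./2 = j./2.
  apply: IH.
  by rewrite -divn2 ltn_divLR // -expnSr.
  by rewrite -divn2 ltn_divLR // -expnSr.
  move=> k Hk; rewrite -!divn2 -!divnMA -expnS; exact: H.
by rewrite -(odd_double_half i) -(odd_double_half j) H0 E.
Qed.

Lemma bits_inj n (i j : 'I_(2^n)) : (forall k, qbit i k = qbit j k) -> i = j.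
Proof.
move=> H; apply: val_inj; apply: (@bits_inj_nat n); [exact: ltn_ord|exact: ltn_ord|move=> k Hk].
have := H (Ordinal Hk); move/(congr1 val); rewrite /= !qbitE.
by case: odd; case: odd.
Qed.

Definition bitsf n (i : 'I_(2^n)) : {ffun 'I_n -> 'I_2} := [ffun k => qbit i k].

Lemma bitsf_bij n : bijective (@bitsf n).
Proof.
apply: inj_card_bij.
  by move=> i j /ffunP H; apply: bits_inj => k; have := H k; rewrite !ffunE.
by rewrite card_ffun !card_ord.
Qed.

Lemma sum_bits n (g : 'I_n -> 'I_2 -> C) :
  \sum_(j < 2^n) \prod_(k < n) g k (qbit j k) = \prod_(k < n) \sum_(b < 2) g k b.
Proof.
rewrite bigA_distr_bigA /=.
rewrite (reindex (@bitsf n)) /=; last first.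
  by apply: onW_bij; exact: bitsf_bij.
by apply: eq_bigr => j _; apply: eq_bigr => k _; rewrite ffunE.
Qed.

End A.

Section C.
Variable R : realType.
Local Notation C := R[i].
Variable n : nat.
Local Notation PS := (pauli_string n).
Local Notation pm := (@pauli_mx R n).

Definition pxor (P Q : PS) : PS := [ffun k => xor4 (P k) (Q k)].
Definition phs (P Q : PS) : C := \prod_(k < n) ph R (P k) (Q k).
Definition chi (P Q : PS) : C := \prod_(k < n) sgn R (anti (P k) (Q k)).

Lemma pauli_mul (P Q : PS) : pm P *m pm Q = phs P Q *: pm (pxor P Q).
Proof.
apply/matrixP => i l; rewrite !mxE.
under eq_bigr do rewrite !mxE -big_split /=.
rewrite (sum_bits (fun k b => sigma R (P k) (qbit i k) b * sigma R (Q k) b (qbit l k))).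
rewrite /phs -big_split /=; apply: eq_bigr => k _.
by rewrite sigma_mul ffunE.
Qed.

Lemma pauli_herm (P : PS) i j : ((pm P) i j)^*%C = (pm P) j i.
Proof.
rewrite !mxE rmorph_prod; apply: eq_bigr => k _; exact: sigma_conj.
Qed.

Lemma pauli0 : pm [ffun=> ord0] = 1%:M.
Proof.
apply/matrixP => i j; rewrite !mxE.
under eq_bigr do rewrite ffunE sigma0.
case: eqVneq => [->|ne].
  by rewrite big1 // => k _; rewrite eqxx.
case: (pickP (fun k => qbit i k != qbit j k)) => [k Hk|H]; last first.
  by case/eqP: ne; apply: bits_inj => k; apply/eqP; have := H k => /= /negbFE.
by rewrite (bigD1 k) //= (negbTE Hk) mul0r.
Qed.

Lemma pxorC (P Q : PS) : pxor P Q = pxor Q P.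
Proof. by apply/ffunP => k; rewrite !ffunE xor4C. Qed.

Lemma phs_comm (P Q : PS) : phs P Q = chi P Q * phs Q P.
Proof. by rewrite /phs /chi -big_split; apply: eq_bigr => k _; rewrite ph_comm. Qed.

Lemma pauli_comm (P Q : PS) : pm P *m pm Q = chi P Q *: (pm Q *m pm P).
Proof. by rewrite !pauli_mul scalerA -phs_comm pxorC. Qed.

Lemma phs_sq (P Q : PS) : phs P Q ^+ 2 = chi P Q.
Proof. by rewrite /phs -prodrXl; apply: eq_bigr => k _; rewrite ph_sq. Qed.

Lemma chiC (P Q : PS) : chi P Q = chi Q P.
Proof. by apply: eq_bigr => k _; rewrite antiC. Qed.

Lemma sgn_xor b1 b2 : sgn R (b1 (+) b2) = sgn R b1 * sgn R b2.
Proof. by case: b1; case: b2; rewrite /sgn /= ?mulN1r ?opprK ?mul1r. Qed.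

Lemma chi_xor (S S' Q : PS) : chi (pxor S S') Q = chi S Q * chi S' Q.
Proof.
by rewrite /chi -big_split; apply: eq_bigr => k _; rewrite ffunE anti_xor sgn_xor.
Qed.

Lemma chi_pm1 (P Q : PS) : chi P Q = 1 \/ chi P Q = -1.
Proof.
have H : chi P Q ^+ 2 = 1.
  by rewrite /chi -prodrXl big1 // => k _; rewrite /sgn; case: anti; rewrite ?sqrrN expr1n.
by move/eqP: H; rewrite sqrf_eq1 => /orP[/eqP|/eqP]; auto.
Qed.

Lemma sum_sgn (a : 'I_4) : \sum_(q < 4) sgn R (anti a q) = if nat_of_ord a == 0%N then 4%:R else 0.
Proof.
rewrite !big_ord_recl big_ord0 /=.
case: a => [[|[|[|[|?]]]] ?] //=; rewrite /sgn /anti /=.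
all: ring.
Qed.


Definition P0 : PS := [ffun=> ord0].

Lemma sum_chi (S : PS) : \sum_(Q : PS) chi S Q = if S == P0 then (4 ^ n)%:R else 0.
Proof.
rewrite /chi -(bigA_distr_bigA (fun k q => sgn R (anti (S k) q))) /=.
under eq_bigr do rewrite sum_sgn.
case: eqVneq => [->|ne].
  rewrite (eq_bigr (fun _ => 4%:R)) => [|k _]; last by rewrite ffunE.
  by rewrite prodr_const card_ord natrX.
case: (pickP (fun k => nat_of_ord (S k) != 0%N)) => [k Hk|H]; last first.
  case/eqP: ne; apply/ffunP => k; rewrite ffunE; apply: val_inj => /=.
  by have := H k => /= /negbFE/eqP.
by rewrite (bigD1 k) //= (negbTE Hk) mul0r.
Qed.

End C.

Section D.
Variable R : realType.
Local Notation C := R[i].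
Variable n : nat.
Local Notation PS := (pauli_string n).
Local Notation pm := (@pauli_mx R n).
Variable psi : 'cV[C]_(2 ^ n).
Hypothesis pure : is_pure_state psi.

Definition ev (v : 'cV[C]_(2 ^ n)) : C := \sum_i (psi i 0)^*%C * v i 0.

Lemma expval_ev P : expval P psi = ev (pm P *m psi).
Proof.
rewrite /expval /ev; apply: eq_bigr => i _; rewrite mxE mulr_sumr.
by apply: eq_bigr => j _; rewrite mulrA.
Qed.

Lemma evZ a v : ev (a *: v) = a * ev v.
Proof. by rewrite /ev mulr_sumr; apply: eq_bigr => i _; rewrite mxE mulrCA. Qed.

Lemma psi_neq0 : exists i, psi i 0 != 0.
Proof.
case: (pickP (fun i => psi i 0 != 0)) => [i Hi|H]; first by exists i.
move: pure; rewrite /is_pure_state big1 => [/esym/eqP|i _]; first by rewrite oner_eq0.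
by have := H i => /= /negbFE/eqP ->; rewrite mulr0.
Qed.

Lemma scal_inj a b : a *: psi = b *: psi -> a = b.
Proof.
case: psi_neq0 => i Hi /matrixP/(_ i 0); rewrite !mxE => E.
by move/eqP: E; rewrite -subr_eq0 -mulrBl mulf_eq0 (negbTE Hi) orbF subr_eq0 => /eqP.
Qed.

Definition pm1 (s : C) := s = 1 \/ s = -1.

Lemma pm1_mul s t : pm1 s -> pm1 t -> pm1 (s * t).
Proof. by case=> ->; case=> ->; rewrite ?mulr1 ?mulrN1 ?opprK; [left|right|right|left]. Qed.

Lemma pm1_conj s : pm1 s -> (s^*)%C = s.
Proof. by case=> ->; rewrite ?rmorphN rmorph1. Qed.

Lemma pm1_sq s : pm1 s -> s * s = 1.
Proof. by case=> ->; rewrite ?mulrNN mulr1. Qed.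

Lemma inStP P : reflect (exists2 s, pm1 s & pm P *m psi = s *: psi) (P \in St psi).
Proof.
rewrite inE; apply: (iffP orP).
  by case=> /eqP->; [exists 1; [left|rewrite scale1r] | exists (-1); [right|rewrite scaleN1r]].
by case=> s [->|->] ->; [left; rewrite scale1r | right; rewrite scaleN1r].
Qed.

Lemma ev_stab S s w : pm S *m psi = s *: psi -> ev (pm S *m w) = (s^*)%C * ev w.
Proof.
move=> HS; rewrite /ev.
have E j : \sum_i (psi i 0)^*%C * pm S i j = (s^*)%C * (psi j 0)^*%C.
  have M (A : 'M[C]_(2 ^ n)) (v : 'cV[C]_(2 ^ n)) : (A *m v) j 0 = \sum_i A j i * v i 0.
    by rewrite mxE.
  have := congr1 (fun v : 'cV[C]_(2 ^ n) => ((v j 0)^*)%C) HS => /=.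
  rewrite M [in X in _ = X -> _]mxE rmorph_sum rmorphM => <-.
  apply: eq_bigr => i _; rewrite rmorphM [RHS]mulrC; congr (_ * _).
  by change (pm S i j = ((pm S j i)^*)%C); rewrite pauli_herm.
under eq_bigr do rewrite mxE mulr_sumr.
rewrite exchange_big /= mulr_sumr; apply: eq_bigr => j _.
by rewrite mulrA -E mulr_suml; apply: eq_bigr => i _; rewrite mulrA.
Qed.

Lemma comm_of_expval S Q : S \in St psi -> expval Q psi != 0 -> chi R S Q = 1.
Proof.
case/inStP=> s Hs HS; rewrite expval_ev => Hne.
have Hpsi : psi = s *: (pm S *m psi) by rewrite HS scalerA pm1_sq // scale1r.
have E : ev (pm Q *m psi) = s * chi R Q S * (s^*)%C * ev (pm Q *m psi).
  rewrite {1}Hpsi -scalemxAr evZ mulmxA pauli_comm -scalemxAl evZ -mulmxA.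
  by rewrite (ev_stab _ HS) !mulrA.
move: E; rewrite pm1_conj // [s * _ * s]mulrAC pm1_sq // mul1r => E.
by rewrite chiC; apply: (mulIf Hne); rewrite mul1r -E.
Qed.

Lemma St_xor S T : S \in St psi -> T \in St psi -> pxor S T \in St psi.
Proof.
case/inStP=> s Hs HS; case/inStP=> t Ht HT.
have Hc : chi R S T = 1.
  have E1 : pm S *m pm T *m psi = (t * s) *: psi by rewrite -mulmxA HT -scalemxAr HS scalerA.
  have E2 : pm T *m pm S *m psi = (s * t) *: psi by rewrite -mulmxA HS -scalemxAr HT scalerA.
  move: E1; rewrite pauli_comm -scalemxAl E2 scalerA mulrC => /scal_inj E.
  have st0 : s * t != 0 by case: (pm1_mul Hs Ht) => ->; rewrite ?oppr_eq0 oner_eq0.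
  by apply: (mulIf st0); rewrite mul1r mulrC E mulrC.
have Hp : pm1 (phs R S T) by move: (phs_sq R S T); rewrite Hc => /eqP; rewrite sqrf_eq1 => /orP[/eqP|/eqP]; [left|right].
apply/inStP; exists (phs R S T * (t * s)); first by apply: pm1_mul => //; apply: pm1_mul.
have E1 : pm S *m pm T *m psi = (t * s) *: psi by rewrite -mulmxA HT -scalemxAr HS scalerA.
move: E1; rewrite pauli_mul -scalemxAl => E1.
rewrite -[LHS]scale1r -(pm1_sq Hp) -scalerA E1 scalerA //.
Qed.


Lemma P0_St : P0 n \in St psi.
Proof. by apply/inStP; exists 1; [left | rewrite /P0 pauli0 mul1mx scale1r]. Qed.

Definition K : {set PS} := [set Q | [forall S in St psi, chi R S Q == 1]].

Lemma pxorK (S0 : PS) : involutive (pxor S0).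
Proof. by move=> S; apply/ffunP => k; rewrite !ffunE xor4K. Qed.

Lemma sum_St Q : \sum_(S in St psi) chi R S Q = if Q \in K then (#|St psi|)%:R else 0.
Proof.
case: ifP => HK.
  rewrite (eq_bigr (fun _ => 1)) ?sumr_const //.
  by move=> S HS; move: HK; rewrite inE => /forall_inP/(_ S HS)/eqP.
case: (pickP (fun S => (S \in St psi) && (chi R S Q != 1))) => [S0 /andP[H0 H1]|H]; last first.
  move/negbT: HK; rewrite inE => /forall_inPn [S HS HS'].
  by have := H S; rewrite HS HS'.
have Hm : chi R S0 Q = -1 by case: (chi_pm1 R S0 Q) => // E; rewrite E eqxx in H1.
have E : \sum_(S in St psi) chi R S Q = - \sum_(S in St psi) chi R S Q.
  rewrite {1}(reindex_inj (can_inj (pxorK S0))) /=.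
  rewrite -sumrN; apply: eq_big => S.
    apply/idP/idP => HS; last exact: St_xor.
    by rewrite -(pxorK S0 S); apply: St_xor.
  by move=> _; rewrite chi_xor Hm mulN1r.
move: E; set x := \sum_(S in St psi) _ => /eqP.
by rewrite -subr_eq0 opprK -mulr2n mulrn_eq0 /= => /eqP.
Qed.

Lemma card_K : (#|St psi| * #|K|)%N = (4 ^ n)%N.
Proof.
apply/eqP; rewrite -(@eqr_nat C); apply/eqP.
have E1 : \sum_(Q : PS) \sum_(S in St psi) chi R S Q = (#|St psi| * #|K|)%:R.
  under eq_bigr do rewrite sum_St.
  by rewrite -big_mkcond /= sumr_const natrM mulr_natr.
have E2 : \sum_(Q : PS) \sum_(S in St psi) chi R S Q = (4 ^ n)%:R.
  rewrite exchange_big /=.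
  under eq_bigr do rewrite sum_chi.
  rewrite (bigD1 (P0 n)) ?P0_St //= eqxx big1 ?addr0 // => S /andP[_ /negbTE ->] //.
by rewrite -E1 E2.
Qed.

Lemma A_sub : [set P : PS | expval P psi != 0] \subset K.
Proof.
apply/subsetP => Q; rewrite !inE => HQ; apply/forall_inP => S HS.
by rewrite (comm_of_expval HS HQ).
Qed.

Lemma card_bound : (#|St psi| * pcard psi <= 4 ^ n)%N.
Proof. by rewrite -card_K leq_mul2l subset_leq_card ?orbT // A_sub. Qed.

Lemma conjM (x y : C) : ((x * y)^*)%C = (x^*)%C * (y^*)%C.
Proof. exact: rmorphM. Qed.
Lemma conjK (x : C) : ((x^*)^*)%C = x.
Proof. exact: conjcK. Qed.
Lemma conjS (I : finType) (F : I -> C) : ((\sum_i F i)^*)%C = \sum_i ((F i)^*)%C.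
Proof. exact: rmorph_sum. Qed.

Lemma expval_real P : ((expval P psi)^*)%C = expval P psi.
Proof.
rewrite /expval conjS exchange_big /=; apply: eq_bigr => j _.
rewrite conjS; apply: eq_bigr => i _.
rewrite !conjM conjK pauli_herm.
by ring.
Qed.

Lemma prod_bits_eq (i j k l : 'I_(2 ^ n)) :
  \prod_(m < n) ((qbit i m == qbit k m) && (qbit j m == qbit l m))%:R = ((i == k) && (j == l))%:R :> C.
Proof.
case: (boolP ((i == k) && (j == l))) => [/andP[/eqP-> /eqP->]|ne].
  by rewrite big1 // => m _; rewrite !eqxx.
case: (pickP (fun m => ~~ ((qbit i m == qbit k m) && (qbit j m == qbit l m)))) => [m Hm|H].
  by rewrite (bigD1 m) //= (negbTE Hm) mul0r.
case/negP: ne; apply/andP; split; apply/eqP; apply: bits_inj => m; have := H m => /= /negbFE/andP[/eqP ? /eqP ?] //.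
Qed.

Lemma sumP_pauli (i j k l : 'I_(2 ^ n)) :
  \sum_(P : PS) pm P i j * ((pm P k l)^*)%C = (2 ^ n)%:R * ((i == k) && (j == l))%:R.
Proof.
under eq_bigr do rewrite pauli_herm !mxE -big_split /=.
rewrite -(bigA_distr_bigA (fun m a => sigma R a (qbit i m) (qbit j m) * sigma R a (qbit l m) (qbit k m))) /=.
under eq_bigr do rewrite sigma_pars.
by rewrite big_split /= prodr_const card_ord natrX prod_bits_eq.
Qed.

Lemma sum_delta2 (f : 'I_(2 ^ n) -> 'I_(2 ^ n) -> C) i j :
  \sum_k \sum_l f k l * ((i == k) && (j == l))%:R = f i j.
Proof.
rewrite (bigD1 i) //= [X in _ + X]big1 => [|k Hk]; last first.
  by rewrite big1 // => l _; rewrite eq_sym (negbTE Hk) mulr0.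
rewrite addr0 (bigD1 j) //= [X in _ + X]big1 => [|l Hl]; last by rewrite eqxx eq_sym (negbTE Hl) mulr0.
by rewrite !eqxx mulr1 addr0.
Qed.

Lemma parseval : \sum_(P : PS) expval P psi * ((expval P psi)^*)%C = (2 ^ n)%:R.
Proof.
have E P : expval P psi * ((expval P psi)^*)%C =
    \sum_i \sum_j \sum_k \sum_l ((psi i 0)^*%C * psi j 0 * psi k 0 * (psi l 0)^*%C) *
       (pm P i j * ((pm P k l)^*)%C).
  rewrite {2}/expval conjS /expval mulr_suml; apply: eq_bigr => i _.
  rewrite mulr_suml; apply: eq_bigr => j _.
  rewrite mulr_sumr; apply: eq_bigr => k _.
  rewrite conjS mulr_sumr; apply: eq_bigr => l _.
  rewrite !conjM conjK; ring.
under eq_bigr do rewrite E.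
rewrite exchange_big; under eq_bigr do rewrite exchange_big.
under eq_bigr do under eq_bigr do rewrite exchange_big.
under eq_bigr do under eq_bigr do under eq_bigr do rewrite exchange_big.
under eq_bigr do under eq_bigr do under eq_bigr do under eq_bigr do rewrite -mulr_sumr sumP_pauli mulrA.
under eq_bigr do under eq_bigr do rewrite sum_delta2.
rewrite /=.
have -> : \sum_i \sum_j (psi i 0)^*%C * psi j 0 * psi i 0 * (psi j 0)^*%C * (2 ^ n)%:R =
   (\sum_i (psi i 0)^*%C * psi i 0) * (\sum_j (psi j 0)^*%C * psi j 0) * (2 ^ n)%:R.
  rewrite mulr_suml mulr_suml; apply: eq_bigr => i _.
  rewrite mulr_sumr mulr_suml; apply: eq_bigr => j _; ring.
by rewrite pure mul1r mul1r.
Qed.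
End D.

Section G.
Variable R : realType.

Lemma tangent_concave (b z : R) : 0 <= b <= 1 -> 0 <= z -> z `^ b <= 1 + b * (z - 1).
Proof.
move=> /andP[b0 b1] z0.
have [->|bn0] := eqVneq b 0; first by rewrite powRr0 mul0r addr0.
have [->|bn1] := eqVneq b 1; first by rewrite powRr1 // mul1r addrC subrK.
have bp : 0 < b by rewrite lt_def bn0.
have b1' : b < 1 by rewrite lt_def eq_sym bn1.
have q0 : 0 < 1 - b by rewrite subr_gt0.
have ib : 0 < b^-1 by rewrite invr_gt0.
have iq : 0 < (1 - b)^-1 by rewrite invr_gt0.
have := @conjugate_powR R (z `^ b) 1 b^-1 (1 - b)^-1 (powR_ge0 _ _) ler01 ib iq.
rewrite !invrK addrC subrK => /(_ erefl).
rewrite mulr1 -powRrM mulfV // powRr1 // powR1.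
move=> H; apply: (le_trans H); rewrite le_eqVlt; apply/orP; left; apply/eqP; ring.
Qed.

Lemma tangent_convex (a z : R) : 1 <= a -> 0 <= z -> 1 + a * (z - 1) <= z `^ a.
Proof.
move=> a1 z0.
have a0 : 0 < a by apply: lt_le_trans a1.
have := @tangent_concave a^-1 (z `^ a).
rewrite invr_ge0 ltW //= invf_le1 // => /(_ a1 (powR_ge0 _ _)).
rewrite -powRrM mulfV ?gt_eqF // powRr1 // => H.
have : a * z <= a * (1 + a^-1 * (z `^ a - 1)) by rewrite ler_pM2l.
rewrite mulrDr mulrA mulfV ?gt_eqF // mul1r mulr1 => H2.
lra.
Qed.


Variable I : finType.
Variable p : I -> R.
Hypothesis hp0 : forall x, 0 <= p x.
Hypothesis hp1 : \sum_x p x = 1.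
Let N := #|[set x | p x != 0]|.

Lemma supp_sum : \sum_(x | p x != 0) p x = 1.
Proof.
rewrite -hp1 [RHS](bigID (fun x => p x != 0)) /= [X in _ = _ + X]big1 ?addr0 // => x.
by rewrite negbK => /eqP.
Qed.

Lemma supp_card : \sum_(x | p x != 0) (1 : R) = N%:R.
Proof. by rewrite sumr_const /N cardsE. Qed.

Lemma N_gt0 : (0 < N)%N.
Proof.
rewrite lt0n; apply/negP => /eqP N0.
have : \sum_(x | p x != 0) p x = 0.
  apply: big1 => x Hx; move: N0; rewrite /N => /eqP; rewrite cards_eq0 => /eqP/setP/(_ x).
  by rewrite !inE Hx.
by rewrite supp_sum => /eqP; rewrite oner_eq0.
Qed.

Lemma supp_pos x : p x != 0 -> 0 < p x.
Proof. by move=> H; rewrite lt_def H hp0. Qed.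

Lemma renyi_le (a : R) : 0 <= a -> a != 1 ->
  (1 - a)^-1 * ln (\sum_(x | p x != 0) p x `^ a) <= ln N%:R.
Proof.
move=> a0 a1.
have Np : 0 < N%:R :> R by rewrite ltr0n N_gt0.
set S := \sum_(x | p x != 0) p x `^ a.
have Sp : 0 < S.
  rewrite /S; have [x Hx] : exists x, p x != 0.
    by have := N_gt0; rewrite card_gt0 => /set0Pn [x]; rewrite inE; exists x.
  rewrite (bigD1 x) //= ltr_pwDl ?powR_gt0 ?supp_pos //.
  by apply: sumr_ge0 => y _; apply: powR_ge0.
have NS : N%:R `^ a * S = \sum_(x | p x != 0) (N%:R * p x) `^ a.
  by rewrite mulr_sumr; apply: eq_bigr => x _; rewrite powRM ?hp0 ?ler0n.
have Lin : \sum_(x | p x != 0) (1 + a * (N%:R * p x - 1)) = N%:R :> R.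
  rewrite big_split /= -mulr_sumr sumrB -mulr_sumr supp_sum supp_card; ring.
have lnNS : ln (N%:R `^ a * S) = a * ln N%:R + ln S by rewrite lnM ?posrE ?powR_gt0 // ln_powR.
have [alt|agt] := ltrP a 1.
  have H : N%:R `^ a * S <= N%:R.
    rewrite NS -[X in _ <= X]Lin; apply: ler_sum => x Hx.
    by apply: tangent_concave; [rewrite a0 ltW | rewrite mulr_ge0 ?ler0n ?hp0].
  have : ln (N%:R `^ a * S) <= ln N%:R by rewrite ler_ln ?posrE ?mulr_gt0 ?powR_gt0.
  rewrite lnM ?posrE ?powR_gt0 // ln_powR => H2.
  have k0 : 0 < (1 - a)^-1 by rewrite invr_gt0 subr_gt0.
  have E : ln N%:R = (1 - a)^-1 * ((1 - a) * ln N%:R) by rewrite mulrA mulVf ?mul1r // subr_eq0 eq_sym.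
  by rewrite [X in _ <= X]E ler_pM2l //; lra.
have agt' : 1 < a by rewrite lt_def a1 agt.
have H : N%:R <= N%:R `^ a * S.
  rewrite NS -[X in X <= _]Lin; apply: ler_sum => x Hx.
  by apply: tangent_convex; rewrite ?mulr_ge0 ?ler0n ?hp0.
have : ln N%:R <= ln (N%:R `^ a * S) by rewrite ler_ln ?posrE ?mulr_gt0 ?powR_gt0.
rewrite lnM ?posrE ?powR_gt0 // ln_powR => H2.
have k0 : (1 - a)^-1 < 0 by rewrite invr_lt0 subr_lt0.
have E : ln N%:R = (1 - a)^-1 * ((1 - a) * ln N%:R) by rewrite mulrA mulVf ?mul1r // subr_eq0 eq_sym.
by rewrite [X in _ <= X]E ler_nM2l //; lra.
Qed.

Lemma ln_le_sub1 (y : R) : 0 < y -> ln y <= y - 1.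
Proof.
move=> y0; have H := @le_ln1Dx R (y - 1).
have E : 1 + (y - 1) = y by rewrite addrCA subrr addr0.
by rewrite E in H; apply: H; lra.
Qed.

Lemma shannon_le : - \sum_(x | p x != 0) p x * ln (p x) <= ln N%:R.
Proof.
have Np : 0 < N%:R :> R by rewrite ltr0n N_gt0.
have H x : p x != 0 -> - (p x * ln (p x)) <= p x * ln N%:R + (N%:R^-1 - p x).
  move=> Hx; have px := supp_pos Hx.
  have := @ln_le_sub1 (N%:R * p x)^-1; rewrite invr_gt0 mulr_gt0 // => /(_ isT).
  rewrite lnV ?posrE ?mulr_gt0 // lnM ?posrE // => H.
  have := H; rewrite -(ler_pM2l px) => H2.
  have E : p x * ((N%:R * p x)^-1 - 1) = N%:R^-1 - p x.
    by rewrite mulrBr mulr1 invfM mulrCA mulfV ?gt_eqF // mulr1.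
  rewrite E in H2; move: H2; rewrite mulrN mulrDr; lra.
rewrite -sumrN; apply: (le_trans (ler_sum _ H)).
rewrite big_split /= -mulr_suml supp_sum mul1r sumrB.
have -> : \sum_(i | p i != 0) N%:R^-1 = N%:R^-1 * \sum_(i | p i != 0) (1 : R).
  by rewrite mulr_sumr; apply: eq_bigr => i _; rewrite mulr1.
by rewrite supp_card mulVf ?gt_eqF // supp_sum subrr addr0.
Qed.
End G.

Section F.
Variable R : realType.
Local Notation C := R[i].

Lemma real_of_conj (z : C) : (z^*)%C = z -> z = ((complex.Re z)%:C)%C.
Proof.
case: z => a b /eqP; rewrite eq_complex /= => /andP[_ /eqP H].
apply/eqP; rewrite eq_complex /= eqxx /=; apply/eqP; lra.
Qed.

Lemma ln2_gt0 : 0 < ln (2 : R).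
Proof. by apply: ln_gt0; rewrite ltr1n. Qed.

Lemma log2_dim n : log2 (dimR R n) = n%:R.
Proof.
rewrite /log2 /dimR natrX lnXn ?ltr0n // -[ln 2 *+ n]mulr_natr mulrAC mulfV ?mul1r //.
by rewrite gt_eqF // ln2_gt0.
Qed.


Variable n : nat.
Variable psi : 'cV[C]_(2 ^ n).
Hypothesis pure : is_pure_state psi.

Lemma expval_Re P : expval P psi = ((complex.Re (expval P psi))%:C)%C.
Proof. by apply: real_of_conj; exact: expval_real. Qed.

Lemma sum_Re2 : \sum_(P : pauli_string n) (complex.Re (expval P psi)) ^+ 2 = (2 ^ n)%:R.
Proof.
have E P : expval P psi * ((expval P psi)^*)%C = (((complex.Re (expval P psi)) ^+ 2)%:C)%C.
  move: (expval_Re P) (expval_real psi P); set c := expval P psi => Ec Ecj.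
  by rewrite Ecj {1 2}Ec -rmorphM expr2.
have := parseval pure; under eq_bigr do rewrite E.
rewrite -rmorph_sum -(rmorph_nat (real_complex R)).
exact: complexI.
Qed.

Lemma dim_gt0 : 0 < dimR R n.
Proof. by rewrite /dimR ltr0n expn_gt0. Qed.

Lemma sum_Xi : \sum_(P : pauli_string n) Xi P psi = 1.
Proof.
by rewrite /Xi -mulr_sumr sum_Re2 mulVf // gt_eqF // dim_gt0.
Qed.

Lemma Xi_ge0 P : 0 <= Xi P psi.
Proof. by rewrite /Xi; apply: mulr_ge0; [rewrite invr_ge0 ltW // dim_gt0 | exact: sqr_ge0]. Qed.

Lemma Xi_neq0 P : (Xi P psi != 0) = (expval P psi != 0).
Proof.
rewrite /Xi mulf_eq0 invr_eq0 gt_eqF ?dim_gt0 //= sqrf_eq0.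
by rewrite [in RHS]expval_Re fmorph_eq0.
Qed.

Lemma pcard_Xi : pcard psi = #|[set P : pauli_string n | Xi P psi != 0]|.
Proof. by apply: eq_card => P; rewrite !inE Xi_neq0. Qed.


Lemma pcard_gt0 : (0 < pcard psi)%N.
Proof. rewrite pcard_Xi; exact: (N_gt0 sum_Xi). Qed.

Lemma St_gt0 : (0 < #|St psi|)%N.
Proof. by apply/card_gt0P; exists (P0 n); exact: P0_St. Qed.

Lemma part1 : (#|St psi|)%:R <= (dimR R n) ^+ 2 / (pcard psi)%:R.
Proof.
rewrite ler_pdivlMr ?ltr0n ?pcard_gt0 // -natrM /dimR -natrX ler_nat.
by rewrite -expnM [(n * 2)%N]mulnC expnM; exact: card_bound pure.
Qed.

Lemma bound2 : log2 (pcard psi)%:R - n%:R <= nullity psi.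
Proof.
rewrite /nullity /log2.
have l0 := @ln2_gt0.
have H : ln (pcard psi)%:R + ln (#|St psi|)%:R <= ln (dimR R n) *+ 2.
  rewrite -lnM ?posrE ?ltr0n ?pcard_gt0 ?St_gt0 ?expn_gt0 // -lnXn ?dim_gt0 ?expn_gt0 //.
  rewrite ler_ln ?posrE ?mulr_gt0 ?ltr0n ?pcard_gt0 ?St_gt0 ?exprn_gt0 ?dim_gt0 ?expn_gt0 //.
  by rewrite -natrM mulnC /dimR -natrX ler_nat -expnM [(n * 2)%N]mulnC expnM; exact: card_bound pure.
have Ed : ln (dimR R n) / ln 2 = n%:R by exact: log2_dim.
have H2 : (ln (pcard psi)%:R + ln (#|St psi|)%:R) / ln 2 <= (ln (dimR R n) *+ 2) / ln 2.
  by apply: ler_wpM2r; [rewrite invr_ge0 ltW | exact: H].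
move: H2; rewrite mulrDl -[ln (dimR R n) *+ 2]mulr_natl -mulrA Ed => H2.
lra.
Qed.

Lemma bound1 (a : R) : 0 <= a -> Malpha a psi <= log2 (pcard psi)%:R - n%:R.
Proof.
move=> a0.
have l0 := @ln2_gt0.
have il0 : 0 <= (ln (2 : R))^-1 by rewrite invr_ge0 ltW.
rewrite /Malpha log2_dim; case: eqP => [a1|/eqP a1].
  rewrite lerD2r /log2.
  under eq_bigr do rewrite mulrA.
  rewrite -mulr_suml -mulNr; apply: ler_wpM2r => //; rewrite pcard_Xi.
  exact: (shannon_le Xi_ge0 sum_Xi).
rewrite lerD2r /log2 mulrA; apply: ler_wpM2r => //; rewrite pcard_Xi.
exact: (renyi_le Xi_ge0 sum_Xi a0 a1).
Qed.

End F.

Unset Implicit Arguments.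

Theorem mainTheorem2 (R : realType) (n : nat) (psi : 'cV[R[i]]_(2 ^ n)) :
  (1 <= n)%N ->
  is_pure_state psi ->
  [/\ (#|St psi|)%:R <= (dimR R n) ^+ 2 / (pcard psi)%:R,
      Malpha 0 psi <= nullity psi
    & forall alpha : R, 0 <= alpha -> Malpha alpha psi <= nullity psi].
Proof.
move=> _ pure; split.
- exact: (part1 pure).
- exact: (le_trans (bound1 pure (lexx 0)) (bound2 pure)).
- by move=> a a0; exact: (le_trans (bound1 pure a0) (bound2 pure)).
Qed.
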